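(* ${\sf ITL}^0_{\circ}$ is complete for the class of expanding posets, and ${\sf ITL}^{\sf FS}_{\circ}$ is complete for the class of persistent posets; that is, every $\mathcal L_\circ$-formula valid on all expanding posets belongs to ${\sf ITL}^0_\circ$, and every $\mathcal L_\circ$-formula valid on all persistent posets belongs to ${\sf ITL}^{\sf FS}_\circ$.
   Context: Syntax: fix a countably infinite set $\mathbb P$ of propositional variables. $\mathcal L_\circ$ is given by $\varphi ::= \bot \mid p \mid \varphi\wedge\varphi \mid \varphi\vee\varphi \mid \varphi\to\varphi \mid \circ\varphi$ with $p\in\mathbb P$; $\neg\varphi:=\varphi\to\bot$. Semantics: a dynamical system is $(X,\mathcal T,f)$ with $(X,\mathcal T)$ a topological space and $f\colon X\to X$ continuous. A valuation assigns to each formula an open set with $[\![\bot]\!]=\varnothing$, $[\![\varphi\wedge\psi]\!]=[\![\varphi]\!]\cap[\![\psi]\!]$, $[\![\varphi\vee\psi]\!]=[\![\varphi]\!]\cup[\![\psi]\!]$, $[\![\varphi\to\psi]\!]=\big((X\setminus[\![\varphi]\!])\cup[\![\psi]\!]\big)^\circ$, $[\![\circ\varphi]\!]=f^{-1}[\![\varphi]\!]$. A formula is valid on a class if $[\![\varphi]\!]=X$ for every system of the class and every valuation. An expanding poset is a dynamical system whose topology is the up-set topology of a partial order $\preccurlyeq$ (open sets = upward closed sets); equivalently $f$ is monotone. A persistent poset is an expanding poset whose map $f$ is moreover open (equivalently: whenever $f(w)\preccurlyeq v'$ there is $w'\succcurlyeq w$ with $f(w')=v'$). Logics: ${\sf ITL}^0_\circ$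 is the least set of $\mathcal L_\circ$-formulas containing all substitution instances of the axioms of intuitionistic propositional logic and of (N1) $\neg\circ\bot$, (N2) $\circ\varphi\wedge\circ\psi\to\circ(\varphi\wedge\psi)$, (N3) $\circ(\varphi\vee\psi)\to\circ\varphi\vee\circ\psi$, (N4) $\circ(\varphi\to\psi)\to(\circ\varphi\to\circ\psi)$, closed under modus ponens and the rule from $\varphi$ infer $\circ\varphi$. ${\sf ITL}^{\sf FS}_\circ$ is defined in the same way but additionally with the axiom (N5) $(\circ\varphi\to\circ\psi)\to\circ(\varphi\to\psi)$. *)

(* Defs.v *)
Inductive form : Type :=
| Bot : form
| Var : nat -> form
| And : form -> form -> form
| Or  : form -> form -> form
| Imp : form -> form -> form
| Next : form -> form.

Definition Neg (p : form) : form := Imp p Bot.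

(* Hilbert calculus.  [fs = false] gives ITL^0_circ, [fs = true] gives
   ITL^FS_circ (adds N5).  Axioms are schemata, so they include all
   substitution instances. *)
Inductive derivable (fs : bool) : form -> Prop :=
| ax_K : forall p q, derivable fs (Imp p (Imp q p))
| ax_S : forall p q r,
    derivable fs (Imp (Imp p (Imp q r)) (Imp (Imp p q) (Imp p r)))
| ax_AndE1 : forall p q, derivable fs (Imp (And p q) p)
| ax_AndE2 : forall p q, derivable fs (Imp (And p q) q)
| ax_AndI : forall p q, derivable fs (Imp p (Imp q (And p q)))
| ax_OrI1 : forall p q, derivable fs (Imp p (Or p q))
| ax_OrI2 : forall p q, derivable fs (Imp q (Or p q))
| ax_OrE : forall p q r,
    derivable fs (Imp (Imp p r) (Imp (Imp q r) (Imp (Or p q) r)))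
| ax_Bot : forall p, derivable fs (Imp Bot p)
| ax_N1 : derivable fs (Neg (Next Bot))
| ax_N2 : forall p q,
    derivable fs (Imp (And (Next p) (Next q)) (Next (And p q)))
| ax_N3 : forall p q,
    derivable fs (Imp (Next (Or p q)) (Or (Next p) (Next q)))
| ax_N4 : forall p q,
    derivable fs (Imp (Next (Imp p q)) (Imp (Next p) (Next q)))
| ax_N5 : forall p q, fs = true ->
    derivable fs (Imp (Imp (Next p) (Next q)) (Next (Imp p q)))
| rule_MP : forall p q, derivable fs (Imp p q) -> derivable fs p -> derivable fs q
| rule_Nec : forall p, derivable fs p -> derivable fs (Next p).

Definition ITL0 (p : form) : Prop := derivable false p.
Definition ITLFS (p : form) : Prop := derivable true p.

Definition is_partial_order {X : Type} (le : X -> X -> Prop) : Prop :=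
  (forall x, le x x) /\
  (forall x y z, le x y -> le y z -> le x z) /\
  (forall x y, le x y -> le y x -> x = y).

(* Open sets of the up-set topology. *)
Definition upset {X : Type} (le : X -> X -> Prop) (S : X -> Prop) : Prop :=
  forall x y, le x y -> S x -> S y.

(* Interior operator of the up-set topology (largest up-set inside S). *)
Definition upint {X : Type} (le : X -> X -> Prop) (S : X -> Prop) : X -> Prop :=
  fun x => forall y, le x y -> S y.

(* Expanding poset: up-set topology of a partial order, f continuous
   (= monotone). *)
Definition expanding_poset {X : Type} (le : X -> X -> Prop) (f : X -> X) : Prop :=
  is_partial_order le /\ (forall x y, le x y -> le (f x) (f y)).

(* Persistent poset: additionally f is open. *)
Definition persistent_poset {X : Type} (le : X -> X -> Prop) (f : X -> X) : Prop :=
  expanding_poset le f /\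
  (forall w v', le (f w) v' -> exists w', le w w' /\ f w' = v').

(* Topological semantics specialised to the up-set topology:
   [[p -> q]] = interior((X \ [[p]]) U [[q]]), [[o p]] = f^{-1}[[p]]. *)
Fixpoint sem {X : Type} (le : X -> X -> Prop) (f : X -> X)
    (V : nat -> X -> Prop) (p : form) : X -> Prop :=
  match p with
  | Bot => fun _ => False
  | Var n => V n
  | And p q => fun x => sem le f V p x /\ sem le f V q x
  | Or p q => fun x => sem le f V p x \/ sem le f V q x
  | Imp p q => upint le (fun x => ~ sem le f V p x \/ sem le f V q x)
  | Next p => fun x => sem le f V p (f x)
  end.

Definition valid_on {X : Type} (le : X -> X -> Prop) (f : X -> X) (p : form) : Prop :=
  forall V : nat -> X -> Prop, (forall n, upset le (V n)) ->
    forall x, sem le f V p x.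

Definition valid_expanding (p : form) : Prop :=
  forall (X : Type) (le : X -> X -> Prop) (f : X -> X),
    expanding_poset le f -> valid_on le f p.

Definition valid_persistent (p : form) : Prop :=
  forall (X : Type) (le : X -> X -> Prop) (f : X -> X),
    persistent_poset le f -> valid_on le f p.

(* Main.v *)
Require Import Defs.
From Stdlib Require Import Classical FunctionalExtensionality PropExtensionality ProofIrrelevance List Arith Lia Cantor.
Import ListNotations.

Fixpoint dec (k : nat) (n : nat) : form :=
  match k with
  | 0 => Bot
  | S k =>
    match of_nat n with
    | (0, _) => Bot
    | (1, r) => Var r
    | (2, r) => And (dec k (fst (of_nat r))) (dec k (snd (of_nat r)))
    | (3, r) => Or (dec k (fst (of_nat r))) (dec k (snd (of_nat r)))
    | (4, r) => Imp (dec k (fst (of_nat r))) (dec k (snd (of_nat r)))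
    | (_, r) => Next (dec k r)
    end
  end.

Lemma dec_ok : forall p, exists k m, forall k', k <= k' -> dec k' m = p.
Proof.
  induction p.
  - exists 0, 0. intros [|k'] _; simpl; reflexivity.
  - exists 1, (to_nat (1, n)). intros [|k'] H; [lia|]. cbn [dec]. rewrite cancel_of_to. reflexivity.
  - destruct IHp1 as [k1 [m1 H1]], IHp2 as [k2 [m2 H2]].
    exists (S (max k1 k2)), (to_nat (2, to_nat (m1, m2))).
    intros [|k'] H; [lia|]. cbn [dec]. rewrite !cancel_of_to. cbn [fst snd].
    rewrite H1, H2 by lia. reflexivity.
  - destruct IHp1 as [k1 [m1 H1]], IHp2 as [k2 [m2 H2]].
    exists (S (max k1 k2)), (to_nat (3, to_nat (m1, m2))).
    intros [|k'] H; [lia|]. cbn [dec]. rewrite !cancel_of_to. cbn [fst snd].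
    rewrite H1, H2 by lia. reflexivity.
  - destruct IHp1 as [k1 [m1 H1]], IHp2 as [k2 [m2 H2]].
    exists (S (max k1 k2)), (to_nat (4, to_nat (m1, m2))).
    intros [|k'] H; [lia|]. cbn [dec]. rewrite !cancel_of_to. cbn [fst snd].
    rewrite H1, H2 by lia. reflexivity.
  - destruct IHp as [k1 [m1 H1]].
    exists (S k1), (to_nat (5, m1)).
    intros [|k'] H; [lia|]. cbn [dec]. rewrite !cancel_of_to.
    rewrite H1 by lia. reflexivity.
Qed.

Definition enum (n : nat) : form := dec (fst (of_nat n)) (snd (of_nat n)).

Lemma enum_surj : forall p, exists n, enum n = p.
Proof.
  intro p. destruct (dec_ok p) as [k [m H]]. exists (to_nat (k, m)).
  unfold enum. rewrite cancel_of_to. simpl. apply H. lia.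
Qed.

Definition add (G : form -> Prop) (a : form) : form -> Prop := fun x => G x \/ x = a.

Inductive Der (fs : bool) (G : form -> Prop) : form -> Prop :=
| Dax : forall p, derivable fs p -> Der fs G p
| Dhyp : forall p, G p -> Der fs G p
| Dmp : forall p q, Der fs G (Imp p q) -> Der fs G p -> Der fs G q.

Lemma der_I fs p : derivable fs (Imp p p).
Proof.
  eapply rule_MP. eapply rule_MP. apply (ax_S fs p (Imp p p) p).
  apply ax_K. apply ax_K.
Qed.

Lemma ded fs G a p : Der fs (add G a) p -> Der fs G (Imp a p).
Proof.
  induction 1.
  - eapply Dmp. apply Dax, ax_K. apply Dax; auto.
  - destruct H as [H| ->].
    + eapply Dmp. apply Dax, ax_K. apply Dhyp; auto.
    + apply Dax, der_I.
  - eapply Dmp. eapply Dmp. apply Dax, (ax_S fs a p q). auto. auto.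
Qed.

Lemma der_mono fs G G' p : (forall x, G x -> G' x) -> Der fs G p -> Der fs G' p.
Proof.
  intros HG. induction 1.
  - apply Dax; auto.
  - apply Dhyp; auto.
  - eapply Dmp; eauto.
Qed.

Lemma der_empty fs p : Der fs (fun _ => False) p -> derivable fs p.
Proof.
  induction 1; [auto|contradiction|eapply rule_MP; eauto].
Qed.

Lemma imp_thm fs G p q : derivable fs (Imp p q) -> Der fs G p -> Der fs G q.
Proof. intros. eapply Dmp; [apply Dax; eauto|auto]. Qed.

Lemma andI fs G a b : Der fs G a -> Der fs G b -> Der fs G (And a b).
Proof. intros. eapply Dmp; [|eauto]. eapply Dmp; [apply Dax, ax_AndI|auto]. Qed.
Lemma andE1 fs G a b : Der fs G (And a b) -> Der fs G a.
Proof. apply imp_thm, ax_AndE1. Qed.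
Lemma andE2 fs G a b : Der fs G (And a b) -> Der fs G b.
Proof. apply imp_thm, ax_AndE2. Qed.
Lemma orI1 fs G a b : Der fs G a -> Der fs G (Or a b).
Proof. apply imp_thm, ax_OrI1. Qed.
Lemma orI2 fs G a b : Der fs G b -> Der fs G (Or a b).
Proof. apply imp_thm, ax_OrI2. Qed.
Lemma botE fs G a : Der fs G Bot -> Der fs G a.
Proof. apply imp_thm, ax_Bot. Qed.
Lemma orE fs G a b c : Der fs G (Or a b) -> Der fs (add G a) c -> Der fs (add G b) c -> Der fs G c.
Proof.
  intros H H1 H2. eapply Dmp; [|exact H].
  eapply Dmp; [|apply ded; exact H2].
  eapply Dmp; [apply Dax, ax_OrE|apply ded; exact H1].
Qed.
Lemma weak fs G a p : Der fs G p -> Der fs (add G a) p.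
Proof. apply der_mono. unfold add; auto. Qed.

Ltac hyp := apply Dhyp; unfold add; intuition (auto; try reflexivity).

Lemma next_mono fs a b : derivable fs (Imp a b) -> derivable fs (Imp (Next a) (Next b)).
Proof. intro H. eapply rule_MP. apply ax_N4. apply rule_Nec, H. Qed.

Lemma thm_of fs p : Der fs (fun _ => False) p -> derivable fs p.
Proof. apply der_empty. Qed.
Fixpoint disj (l : list form) : form :=
  match l with [] => Bot | a :: l => Or a (disj l) end.

Definition cons fs (G D : form -> Prop) : Prop :=
  forall m, (forall x, In x m -> D x) -> ~ Der fs G (disj m).

Lemma disj_app_l fs m1 m2 : forall G, Der fs G (disj m1) -> Der fs G (disj (m1 ++ m2)).
Proof.
  induction m1 as [|a m1 IH]; intros G H; simpl in *.
  - apply botE; auto.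
  - eapply orE; [exact H| |].
    + apply orI1. hyp.
    + apply orI2. apply IH. hyp.
Qed.

Lemma disj_app_r fs m1 m2 G : Der fs G (disj m2) -> Der fs G (disj (m1 ++ m2)).
Proof.
  induction m1 as [|a m1 IH]; intros H; simpl; auto. apply orI2; auto.
Qed.

Lemma disj_split fs D phi m : (forall x, In x m -> add D phi x) ->
  exists m', (forall x, In x m' -> D x) /\
    forall G, Der fs G (disj m) -> Der fs G (Or phi (disj m')).
Proof.
  induction m as [|a m IH]; intros Hm.
  - exists []. split; [simpl; tauto|]. intros G H. apply botE; auto.
  - destruct IH as [m' [Hm' H']]. { intros x Hx. apply Hm. simpl; auto. }
    destruct (Hm a (or_introl eq_refl)) as [Da| ->].
    + exists (a :: m'). split. { intros x [<-|Hx]; auto. }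
      intros G H. simpl in H. eapply orE; [exact H| |].
      * apply orI2. simpl. apply orI1. hyp.
      * assert (Hd : Der fs (add G (disj m)) (Or phi (disj m'))) by (apply H'; hyp).
        eapply orE; [exact Hd| |].
        -- apply orI1. hyp.
        -- apply orI2. simpl. apply orI2. hyp.
    + exists m'. split; auto. intros G H. simpl in H. eapply orE; [exact H| |].
      * apply orI1. hyp.
      * apply H'. hyp.
Qed.

Lemma split_lemma fs G D phi : ~ cons fs (add G phi) D -> ~ cons fs G (add D phi) -> ~ cons fs G D.
Proof.
  unfold cons. intros H1 H2 H. apply H1. intros m1 Hm1 D1. apply H2. intros m2 Hm2 D2.
  destruct (disj_split fs D phi m2 Hm2) as [m' [Hm' H']].
  apply (H (m1 ++ m')).
  - intros x Hx. apply in_app_or in Hx. destruct Hx; auto.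
  - eapply orE; [apply H'; exact D2| |].
    + apply disj_app_l. exact D1.
    + apply disj_app_r. hyp.
Qed.

Lemma cons_mono fs A B A' B' : cons fs A B -> (forall x, A' x -> A x) -> (forall x, B' x -> B x) -> cons fs A' B'.
Proof.
  unfold cons. intros H HA HB m Hm D. apply (H m). intros; auto.
  eapply der_mono; eauto.
Qed.

Fixpoint stage fs (G D : form -> Prop) (n : nat) : (form -> Prop) * (form -> Prop) :=
  match n with
  | 0 => (G, D)
  | S n =>
    let A := fst (stage fs G D n) in
    let B := snd (stage fs G D n) in
    (fun x => A x \/ (x = enum n /\ cons fs (add A (enum n)) B),
     fun x => B x \/ (x = enum n /\ ~ cons fs (add A (enum n)) B))
  end.

Lemma stage_cons fs G D n : cons fs G D -> cons fs (fst (stage fs G D n)) (snd (stage fs G D n)).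
Proof.
  intro H0. induction n as [|n IH]; simpl; auto.
  set (A := fst (stage fs G D n)) in *. set (B := snd (stage fs G D n)) in *.
  destruct (classic (cons fs (add A (enum n)) B)) as [Hc|Hc].
  - eapply cons_mono; [exact Hc| |].
    + intros x [Hx|[-> _]]; unfold add; auto.
    + intros x [Hx|[_ Hn]]; tauto.
  - assert (Hc2 : cons fs A (add B (enum n))).
    { apply NNPP. intro Hn. exact (split_lemma fs A B (enum n) Hc Hn IH). }
    eapply cons_mono; [exact Hc2| |].
    + intros x [Hx|[_ Hn]]; tauto.
    + intros x [Hx|[-> _]]; unfold add; auto.
Qed.

Lemma stage_mono fs G D n k : n <= k -> forall x,
  (fst (stage fs G D n) x -> fst (stage fs G D k) x) /\
  (snd (stage fs G D n) x -> snd (stage fs G D k) x).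
Proof.
  induction 1; intros x; [tauto|]. destruct (IHle x). simpl. tauto.
Qed.

Definition prime_theory fs (W : form -> Prop) : Prop :=
  (forall p, Der fs W p -> W p) /\ ~ W Bot /\ (forall a b, W (Or a b) -> W a \/ W b).

Lemma lindenbaum fs G D : cons fs G D -> exists W, prime_theory fs W /\
  (forall x, G x -> W x) /\ (forall x, D x -> ~ W x).
Proof.
  intro H0.
  set (W := fun x => exists n, fst (stage fs G D n) x).
  set (Dl := fun x => exists n, snd (stage fs G D n) x).
  assert (Hlim : forall p, Der fs W p -> exists n, Der fs (fst (stage fs G D n)) p).
  { induction 1.
    - exists 0. apply Dax; auto.
    - destruct H as [n Hn]. exists n. apply Dhyp; auto.
    - destruct IHDer1 as [n1 K1], IHDer2 as [n2 K2]. exists (max n1 n2).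
      eapply Dmp.
      + eapply der_mono; [|exact K1]. intros x Hx. apply (stage_mono fs G D n1); auto; lia.
      + eapply der_mono; [|exact K2]. intros x Hx. apply (stage_mono fs G D n2); auto; lia. }
  assert (Hlist : forall m, (forall x, In x m -> Dl x) -> exists n, forall x, In x m -> snd (stage fs G D n) x).
  { induction m as [|a m IH]; intros Hm.
    - exists 0. simpl; tauto.
    - destruct (Hm a (or_introl eq_refl)) as [n1 H1].
      destruct IH as [n2 H2]. { intros; apply Hm; simpl; auto. }
      exists (max n1 n2). intros x [<-|Hx].
      + apply (stage_mono fs G D n1); auto; lia.
      + apply (stage_mono fs G D n2); auto; lia. }
  assert (Hcons : cons fs W Dl).
  { intros m Hm Dm. destruct (Hlim _ Dm) as [n1 H1]. destruct (Hlist m Hm) as [n2 H2].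
    apply (stage_cons fs G D (max n1 n2) H0 m).
    - intros x Hx. apply (stage_mono fs G D n2); auto; lia.
    - eapply der_mono; [|exact H1]. intros x Hx. apply (stage_mono fs G D n1); auto; lia. }
  assert (Htot : forall x, W x \/ Dl x).
  { intro x. destruct (enum_surj x) as [n <-].
    destruct (classic (cons fs (add (fst (stage fs G D n)) (enum n)) (snd (stage fs G D n)))) as [Hc|Hc].
    - left. exists (S n). simpl. auto.
    - right. exists (S n). simpl. auto. }
  assert (Hth : forall p, Der fs W p -> W p).
  { intros p Hp. destruct (Htot p) as [|Hd]; auto. exfalso.
    apply (Hcons [p]). { intros x [<-|[]]; auto. } simpl. apply orI1; auto. }
  exists W. split; [split; [|split]|split].
  - exact Hth.
  - intro Hb. apply (Hcons []). { simpl; tauto. } simpl. apply Dhyp; auto.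
  - intros a b Hab. destruct (Htot a) as [|Ha]; auto. destruct (Htot b) as [|Hb]; auto.
    exfalso. apply (Hcons [a; b]). { intros x [<-|[<-|[]]]; auto. }
    simpl. eapply orE; [apply Dhyp; exact Hab| |].
    + apply orI1. hyp.
    + apply orI2, orI1. hyp.
  - intros x Hx. exists 0. exact Hx.
  - intros x Hx HW. apply (Hcons [x]). { intros y [<-|[]]. exists 0. exact Hx. }
    simpl. apply orI1. apply Dhyp; auto.
Qed.
Definition world fs := {W : form -> Prop | prime_theory fs W}.
Definition wset {fs} (u : world fs) : form -> Prop := proj1_sig u.
Definition cle fs (u v : world fs) : Prop := forall p, wset u p -> wset v p.

Lemma next_theory fs (W : form -> Prop) : (forall p, Der fs W p -> W p) ->
  forall q, Der fs (fun p => W (Next p)) q -> W (Next q).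
Proof.
  intros HW. induction 1.
  - apply HW. apply Dax. apply rule_Nec; auto.
  - auto.
  - apply HW. eapply Dmp. eapply Dmp. apply Dax, ax_N4. apply Dhyp; eauto. apply Dhyp; eauto.
Qed.

Lemma next_pt fs W : prime_theory fs W -> prime_theory fs (fun p => W (Next p)).
Proof.
  intros [Ht [Hb Hp]]. split; [|split].
  - apply next_theory; auto.
  - intro H. apply Hb, Ht. eapply Dmp. apply Dax, ax_N1. apply Dhyp; auto.
  - intros a b H. apply Hp. apply Ht. eapply Dmp. apply Dax, ax_N3. apply Dhyp; auto.
Qed.

Definition cf fs (u : world fs) : world fs :=
  exist _ (fun p => wset u (Next p)) (next_pt fs _ (proj2_sig u)).

Lemma world_eq fs (u v : world fs) : (forall p, wset u p <-> wset v p) -> u = v.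
Proof.
  destruct u as [U HU], v as [V HV]. unfold wset; simpl. intro H.
  assert (U = V). { apply functional_extensionality. intro p. apply propositional_extensionality. auto. }
  subst V. f_equal. apply proof_irrelevance.
Qed.

Lemma canon_expanding fs : expanding_poset (cle fs) (cf fs).
Proof.
  split; [split; [|split]|].
  - intros x p; auto.
  - intros x y z H1 H2 p Hp; auto.
  - intros x y H1 H2. apply world_eq. split; auto.
  - intros x y H p. unfold cf, wset; simpl. apply H.
Qed.

Definition cval fs (n : nat) (u : world fs) : Prop := wset u (Var n).

Lemma disj_all fs q m : (forall x, In x m -> x = q) -> forall G, Der fs G (disj m) -> Der fs G q.
Proof.
  induction m as [|a m IH]; intros Hm G H; simpl in H.
  - apply botE; auto.
  - eapply orE; [exact H| |].
    + rewrite <- (Hm a (or_introl eq_refl)). hyp.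
    + apply IH. intros; apply Hm; simpl; auto. hyp.
Qed.

Lemma truth fs p : forall u, sem (cle fs) (cf fs) (cval fs) p u <-> wset u p.
Proof.
  induction p; intro u; destruct (proj2_sig u) as [Ht [Hb Hp]]; fold (wset u) in Ht, Hb, Hp; simpl.
  - split; [contradiction|auto].
  - reflexivity.
  - rewrite IHp1, IHp2. split.
    + intros [H1 H2]. apply Ht. apply andI; apply Dhyp; auto.
    + intro H. split; apply Ht; [eapply andE1|eapply andE2]; apply Dhyp; eauto.
  - rewrite IHp1, IHp2. split.
    + intros [H|H]; apply Ht; [apply orI1|apply orI2]; apply Dhyp; auto.
    + apply Hp.
  - unfold upint. split.
    + intro H. apply NNPP. intro Hn.
      assert (Hc : cons fs (add (wset u) p1) (fun x => x = p2)).
      { intros m Hm D. apply Hn. apply Ht. apply ded. eapply disj_all; eauto. }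
      destruct (lindenbaum _ _ _ Hc) as [W [HW [HGW HDW]]].
      set (w := exist _ W HW : world fs).
      destruct (H w) as [H1|H1].
      * intros q Hq. apply HGW. left; auto.
      * apply H1. apply IHp1. apply HGW. right; auto.
      * apply IHp2 in H1. apply (HDW p2 eq_refl H1).
    + intros H v Huv. destruct (classic (wset v p1)) as [H1|H1].
      * right. apply IHp2. destruct (proj2_sig v) as [Ht' _]. apply Ht'.
        eapply Dmp; apply Dhyp; [apply Huv; exact H|exact H1].
      * left. rewrite IHp1. auto.
  - rewrite IHp. unfold cf, wset; simpl. reflexivity.
Qed.

Lemma complete fs p : valid_on (cle fs) (cf fs) p -> derivable fs p.
Proof.
  intro Hv. apply NNPP. intro Hn.
  assert (Hc : cons fs (fun _ => False) (fun x => x = p)).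
  { intros m Hm D. apply Hn. apply der_empty. eapply disj_all; eauto. }
  destruct (lindenbaum _ _ _ Hc) as [W [HW [_ HDW]]].
  set (w := exist _ W HW : world fs).
  assert (H := Hv (cval fs) (fun n x y H Hx => H _ Hx) w).
  apply truth in H. apply (HDW p eq_refl H).
Qed.
Lemma collect fs (W S : form -> Prop) : (forall p, Der fs S p -> S p) ->
  forall chi, Der fs (fun x => W x \/ exists phi, S phi /\ x = Next phi) chi ->
  exists phi, S phi /\ Der fs W (Imp (Next phi) chi).
Proof.
  intros HS. assert (Htop : S (Imp Bot Bot)) by (apply HS, Dax, ax_Bot).
  induction 1.
  - exists (Imp Bot Bot). split; auto. eapply Dmp. apply Dax, ax_K. apply Dax; auto.
  - destruct H as [H|[phi [Hphi ->]]].
    + exists (Imp Bot Bot). split; auto. eapply Dmp. apply Dax, ax_K. apply Dhyp; auto.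
    + exists phi. split; auto. apply Dax, der_I.
  - destruct IHDer1 as [f1 [Hf1 K1]], IHDer2 as [f2 [Hf2 K2]].
    exists (And f1 f2). split.
    + apply HS. apply andI; apply Dhyp; auto.
    + apply ded. eapply Dmp.
      * eapply Dmp. apply weak; exact K1. eapply imp_thm. apply next_mono, ax_AndE1. hyp.
      * eapply Dmp. apply weak; exact K2. eapply imp_thm. apply next_mono, ax_AndE2. hyp.
Qed.

Lemma disj_next fs (Dv : form -> Prop) m : (forall x, In x m -> exists psi, ~ Dv psi /\ x = Next psi) ->
  exists k, (forall x, In x k -> ~ Dv x) /\ derivable fs (Imp (disj m) (Next (disj k))).
Proof.
  induction m as [|a m IH]; intros Hm.
  - exists []. split; [simpl; tauto|]. apply ax_Bot.
  - destruct IH as [k [Hk Hd]]. { intros; apply Hm; simpl; auto. }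
    destruct (Hm a (or_introl eq_refl)) as [psi [Hpsi ->]].
    exists (psi :: k). split. { intros x [<-|Hx]; auto. }
    apply der_empty. apply ded. simpl. eapply orE; [hyp| |].
    + eapply imp_thm. apply next_mono, ax_OrI1. hyp.
    + eapply imp_thm. apply next_mono, ax_OrI2. eapply imp_thm. exact Hd. hyp.
Qed.

Lemma pt_disj fs W k : prime_theory fs W -> W (disj k) -> exists x, In x k /\ W x.
Proof.
  intros [Ht [Hb Hp]]. induction k as [|a k IH]; simpl; intro H.
  - contradiction.
  - destruct (Hp _ _ H) as [H1|H1]; eauto. destruct (IH H1) as [x [Hx Hx']]; eauto.
Qed.

Lemma canon_open : forall w v', cle true (cf true w) v' -> exists w', cle true w w' /\ cf true w' = v'.
Proof.
  intros w v' Hwv.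
  destruct (proj2_sig v') as [Htv [Hbv Hpv]]. fold (wset v') in Htv, Hbv, Hpv.
  destruct (proj2_sig w) as [Htw _]. fold (wset w) in Htw.
  set (G := fun x => wset w x \/ exists phi, wset v' phi /\ x = Next phi).
  set (D := fun x => exists psi, ~ wset v' psi /\ x = Next psi).
  assert (Hc : cons true G D).
  { intros m Hm Dm.
    destruct (collect true (wset w) (wset v') Htv _ Dm) as [phi [Hphi K]].
    destruct (disj_next true (wset v') m Hm) as [k [Hk Hd]].
    assert (K2 : Der true (wset w) (Imp (Next phi) (Next (disj k)))).
    { apply ded. eapply imp_thm. exact Hd. eapply Dmp. apply weak; exact K. hyp. }
    assert (K3 : Der true (wset w) (Next (Imp phi (disj k)))).
    { eapply Dmp. apply Dax, ax_N5; reflexivity. exact K2. }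
    apply Htw in K3. apply Hwv in K3. unfold cf, wset in K3; simpl in K3. fold (wset v') in K3.
    assert (Hdk : wset v' (disj k)).
    { apply Htv. eapply Dmp; apply Dhyp; eauto. }
    destruct (pt_disj true _ k (proj2_sig v') Hdk) as [x [Hx Hx']].
    apply (Hk x Hx Hx'). }
  destruct (lindenbaum _ _ _ Hc) as [W [HW [HGW HDW]]].
  exists (exist _ W HW). split.
  - intros p Hp. apply HGW. left; auto.
  - apply world_eq. intro p. unfold cf, wset; simpl. fold (wset v'). split.
    + intro H. apply NNPP. intro Hn. apply (HDW (Next p)); auto. exists p; auto.
    + intro H. apply HGW. right. exists p; auto.
Qed.

Theorem theorem5p7 :
  (forall p : form, valid_expanding p -> ITL0 p) /\
  (forall p : form, valid_persistent p -> ITLFS p).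
Proof.
  split; intros p Hv; apply complete; apply Hv.
  - apply canon_expanding.
  - split; [apply canon_expanding|apply canon_open].
Qed.
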